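(* Let $X$ be a nonempty set and $f: X \to X$ a map. For $k \ge 1$ let $E^k = X - f^k(X)$, let $E = E^1$, and let $E^\infty = \bigcup_{k>0} E^k$. Suppose $E$ is finite and that there is no $K>0$ with $E^K = E^\infty$. Then there exists a point $e \in E$ such that the points $f^k(e)$, $k > 0$, all belong to $E^\infty$ and are pairwise distinct. Moreover, for any such $e$ there is a positive integer $M(e)$ such that for every $k \ge M(e)$ the equation $f(x) = f^k(e)$ has exactly one solution $x\in X$, namely $x = f^{k-1}(e)$.
   Context: $f^0=\mathrm{Id}$ and $f^{k+1} = f\circ f^k$. No topology or algebraic structure is assumed on $X$. *)

(* Defs.v *)
From Stdlib Require Import List.

Fixpoint fpow {X : Type} (f : X -> X) (k : nat) : X -> X :=
  match k with
  | O => fun x => x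
  | S k' => fun x => f (fpow f k' x)
  end.

Definition Ek {X : Type} (f : X -> X) (k : nat) (y : X) : Prop :=
  ~ (exists x : X, fpow f k x = y).

Definition Einf {X : Type} (f : X -> X) (y : X) : Prop :=
  exists k : nat, 0 < k /\ Ek f k y.

Definition finite_set {X : Type} (A : X -> Prop) : Prop :=
  exists l : list X, forall x, A x -> In x l.

(* Main.v *)
Require Import Defs.
From Stdlib Require Import List Lia Classical Arith.

Lemma fpow_add {X : Type} (f : X -> X) a b x :
  fpow f (a + b) x = fpow f a (fpow f b x).
Proof. induction a; simpl; congruence. Qed.

Lemma fpow_eq {X : Type} (f : X -> X) n m x : n = m -> fpow f n x = fpow f m x.
Proof. intros ->; reflexivity. Qed.

Lemma Ek_mono {X : Type} (f : X -> X) m n y : Ek f m y -> Ek f (m + n) y.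
Proof.
  intros H [z Hz]. apply H. exists (fpow f n z). rewrite <- fpow_add; auto.
Qed.

Definition good {X : Type} (f : X -> X) e K := ~ exists z, fpow f (S K) z = fpow f K e.

Lemma good_down {X : Type} (f : X -> X) e K i : good f e K -> i <= K -> good f e i.
Proof.
  intros H Hi [z Hz]. apply H. exists z.
  rewrite (fpow_eq f (S K) ((K - i) + S i)) by lia.
  rewrite (fpow_eq f K ((K - i) + i)) by lia.
  rewrite !fpow_add, Hz. reflexivity.
Qed.

Lemma tb1 {X : Type} (f : X -> X) t : forall n x K, K <= n ->
  Ek f (n + t) (fpow f n x) -> exists e, Ek f 1 e /\ good f e K.
Proof.
  induction t; intros n x K HK H.
  - exfalso. apply H. exists x. f_equal; lia.
  - destruct (classic (good f x n)) as [G|G].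
    + exists x. split.
      * pose proof (good_down f x n 0 G ltac:(lia)) as G0. exact G0.
      * apply (good_down f x n); auto.
    + apply NNPP in G. destruct G as [z Hz].
      apply (IHt (S n) z K); [lia|]. rewrite Hz.
      replace (S n + t) with (n + S t) by lia. exact H.
Qed.

Lemma tb2 {X : Type} (f : X -> X) t : forall y, Ek f t y ->
  exists j e, Ek f 1 e /\ fpow f j e = y.
Proof.
  induction t; intros y H.
  - exfalso. apply H. exists y. reflexivity.
  - destruct (classic (Ek f 1 y)) as [G|G].
    + exists 0, y. auto.
    + apply NNPP in G. destruct G as [z Hz]. simpl in Hz.
      destruct (IHt z) as [j [e' [He Hj]]].
      * intros [w Hw]. apply H. exists w. simpl. congruence.
      * exists (S j), e'. split; auto. simpl. congruence.
Qed.

Lemma list_bad {X : Type} (f : X -> X) (l : list X) :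
  (forall e, In e l -> Ek f 1 e -> exists K, ~ good f e K) ->
  exists K, forall e, In e l -> Ek f 1 e -> ~ good f e K.
Proof.
  induction l as [|a l IH]; intros H.
  - exists 0. intros e [].
  - destruct IH as [K1 HK1].
    { intros e He. apply H. right; auto. }
    destruct (classic (Ek f 1 a)) as [Ea|Ea].
    + destruct (H a (or_introl eq_refl) Ea) as [Ka HKa].
      exists (Nat.max K1 Ka). intros e [<-|He] E1 G.
      * apply HKa. apply (good_down f a _ _ G). lia.
      * apply (HK1 e He E1). apply (good_down f e _ _ G). lia.
    + exists K1. intros e [<-|He] E1; [contradiction|]. auto.
Qed.

Lemma list_meet {X : Type} (f : X -> X) (e : X) (l : list X) :
  exists C, forall e', In e' l ->
    (exists a c, 0 < c /\ c <= C /\ fpow f a e' = fpow f c e) \/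
    ~ (exists a c, 0 < c /\ fpow f a e' = fpow f c e).
Proof.
  induction l as [|b l IH].
  - exists 0. intros e' [].
  - destruct IH as [C1 HC1].
    destruct (classic (exists a c, 0 < c /\ fpow f a b = fpow f c e)) as [[a [c [Hc Hac]]]|N].
    + exists (Nat.max C1 c). intros e' [<-|He].
      * left. exists a, c. repeat split; auto; lia.
      * destruct (HC1 e' He) as [[a' [c' [H1 [H2 H3]]]]|N]; [left|right; auto].
        exists a', c'. repeat split; auto; lia.
    + exists C1. intros e' [<-|He]; auto.
Qed.

Theorem lemma1 (X : Type) (x0 : X) (f : X -> X) :
  finite_set (Ek f 1) ->
  ~ (exists K : nat, 0 < K /\ forall y : X, Ek f K y <-> Einf f y) ->
  (exists e : X, Ek f 1 e /\
     (forall k, 0 < k -> Einf f (fpow f k e)) /\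
     (forall k l, 0 < k -> 0 < l -> fpow f k e = fpow f l e -> k = l))
  /\
  (forall e : X, Ek f 1 e ->
     (forall k, 0 < k -> Einf f (fpow f k e)) ->
     (forall k l, 0 < k -> 0 < l -> fpow f k e = fpow f l e -> k = l) ->
     exists M : nat, 0 < M /\
       forall k, M <= k -> forall x : X, f x = fpow f k e <-> x = fpow f (k - 1) e).
Proof.
  intros [l Hl] HnK. split.
  - assert (Hmain : forall K, exists e, Ek f 1 e /\ good f e K).
    { intros K.
      assert (N : ~ forall y, Ek f (S K) y <-> Einf f y).
      { intros A. apply HnK. exists (S K). split; [lia|exact A]. }
      apply not_all_ex_not in N. destruct N as [y Hy].
      assert (Ny : ~ Ek f (S K) y).
      { intros E. apply Hy. split; intros _; [exists (S K); split; [lia|auto]|auto]. }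
      assert (Iy : Einf f y).
      { apply NNPP. intros NI. apply Hy. split; intros A; contradiction. }
      destruct Iy as [m [Hm Em]].
      apply NNPP in Ny. destruct Ny as [x Hx].
      apply (tb1 f m (S K) x K); [lia|]. rewrite Hx.
      replace (S K + m) with (m + S K) by lia. apply Ek_mono; auto. }
    destruct (classic (exists e, Ek f 1 e /\ forall K, good f e K)) as [[e [He HG]]|N].
    + exists e. split; [auto|split].
      * intros k Hk. exists (S k). split; [lia|]. exact (HG k).
      * assert (D : forall k l, k < l -> fpow f k e = fpow f l e -> False).
        { intros k m Hkm Heq. apply (HG k). exists (fpow f (m - S k) e).
          rewrite <- fpow_add, Heq. apply fpow_eq. lia. }
        intros k m _ _ Heq. destruct (lt_eq_lt_dec k m) as [[A|A]|A]; auto.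
        -- exfalso; eauto.
        -- exfalso; eauto.
    + destruct (list_bad f l) as [K HK].
      { intros e _ He. apply NNPP. intros NE. apply N. exists e. split; auto.
        intros K. apply NNPP. intros G. apply NE. exists K; auto. }
      destruct (Hmain K) as [e [He G]]. exfalso; exact (HK e (Hl e He) He G).
  - intros e He Hinf Hinj.
    destruct (list_meet f e l) as [C HC].
    exists (S C). split; [lia|]. intros k Hk x. split.
    + intros Hx.
      destruct (Hinf k ltac:(lia)) as [m [Hm Em]].
      assert (Ex : Ek f m x).
      { intros [w Hw]. apply Em. exists (f w).
        rewrite <- Hx, <- Hw. change (f w) with (fpow f 1 w).
        rewrite <- fpow_add. change (f (fpow f m w)) with (fpow f (S m) w).
        apply fpow_eq; lia. }
      destruct (tb2 f m x Ex) as [j [e' [He' Hj]]].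
      destruct (HC e' (Hl e' He')) as [[a [c [Hc [HcC Hac]]]]|NM].
      * destruct (le_lt_dec a j) as [Aj|Aj].
        -- assert (Hx2 : x = fpow f (j - a + c) e).
           { rewrite <- Hj, fpow_add, <- Hac, <- fpow_add. apply fpow_eq. lia. }
           assert (Hkk : S (j - a + c) = k).
           { apply Hinj; [lia|lia|]. simpl. rewrite <- Hx2. auto. }
           rewrite Hx2. apply fpow_eq. lia.
        -- exfalso.
           assert (Hcc : c = a - S j + k).
           { apply Hinj; [lia|lia|]. rewrite <- Hac, fpow_add, <- Hx.
             rewrite <- Hj. rewrite (fpow_eq f a (a - S j + S j)) by lia.
             rewrite fpow_add. reflexivity. }
           lia.
      * exfalso. apply NM. exists (S j), k. split; [lia|]. simpl. congruence.
    + intros ->. destruct k; [lia|]. simpl. rewrite Nat.sub_0_r. reflexivity.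
Qed.
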